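(* Let $\mathsf P'\subset\mathbb R^m$ be a $(\mu',\epsilon')$-net, $0<\Gamma_0\le1$, $\delta_0\ge0$, and $\delta=\delta_0\mu'\epsilon'$. If some $m$-simplex $\sigma^m\in\mathrm{Del}_{D_{\epsilon'}}(\mathsf P')$ is not $\delta$-protected, then $\mathsf P'$ contains a forbidden configuration (with parameters $\mu',\epsilon',\delta_0,\Gamma_0$). Likewise, if some $m$-simplex $\sigma^m\in\mathrm{Del}_{D_{\epsilon'}}(\mathsf P')$ is not $\Gamma_0$-good, then $\mathsf P'$ contains a forbidden configuration.
   Context: Let $d(x,X)$ denote Euclidean distance from a point to a set; $B(c,r)$ is the open ball. For a finite $\mathsf P\subset\mathbb R^m$ and $\epsilon>0$, $\mathsf P$ is $\epsilon$-dense if $d(x,\mathsf P\cup\partial\,\mathrm{conv}(\mathsf P))<\epsilon$ for every $x\in\mathrm{conv}(\mathsf P)$; it is $\mu\epsilon$-separated if $\|p-q\|\ge\mu\epsilon$ for all distinct $p,q\in\mathsf P$. For $0<\mu\le1$, $\mathsf P$ is a $(\mu,\epsilon)$-net if it is $\epsilon$-dense and $\mu\epsilon$-separated. $D_\epsilon(\mathsf P)=\{x\in\mathrm{conv}(\mathsf P): d(x,\partial\,\mathrm{conv}(\mathsf P))\ge\epsilon\}$. A simplex is a nonempty finite subset $\sigma\subset\mathbb R^m$ (vertices need not be affinely independent); $\dim\sigma=|\sigma|-1$; faces are nonempty subsets. For $p\in\sigma$, $\sigma_p=\sigma\setminus\{p\}$. $L(\sigma)$ is the largest distance between vertices. Altitude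 $D(p,\sigma)=d(p,\mathrm{aff}(\sigma_p))$. Thickness of a $j$-simplex: $\Upsilon(\sigma)=1$ if $j=0$, else $\min_{p}D(p,\sigma)/(jL(\sigma))$. $\sigma$ is $\Gamma_0$-good if every $j$-face $\sigma^j$ satisfies $\Upsilon(\sigma^j)\ge\Gamma_0^j$; $\Gamma_0$-bad otherwise; a $\Gamma_0$-flake is a $\Gamma_0$-bad simplex whose proper faces are all $\Gamma_0$-good. A circumscribing ball of $\sigma$ is an open ball whose boundary contains all vertices of $\sigma$. A Delaunay ball for finite $\mathsf P$ is an open ball $B(x,r)$ containing no point of $\mathsf P$ such that every open ball centred at $x$ containing no point of $\mathsf P$ is contained in $B(x,r)$. $\sigma\subseteq\mathsf P$ is Delaunay if its vertices lie on $\partial B$ for some Delaunay ball $B$. $\mathrm{Del}_{D_\epsilon}(\mathsf P)$ is the set of Delaunay simplices having a Delaunay ball centred in $D_\epsilon(\mathsf P)$. A Delaunay simplex $\sigma$ is $\delta$-protected if it has a Delaunay ball $B$ with $d(q,\partial B)>\delta$ for all $q\in\mathsf P\setminus\sigma$. Forbidden configuration: given a finite $\mathsf P'\subset\mathbb R^m$ and parameters $\mu',\epsilon'>0$, $0<\Gamma_0\le1$, $\delta_0\ge0$, a $(k+1)$-simplex $\tau\subseteq\mathsf P'$ with $k\le m$ is a forbidden configuration if it is a $\Gamma_0$-flake and there exist $p\in\tau$ and a circumscribing ball $B(C,R)$ of $\tau_p$ with $R<\epsilon'$ and $\big|\,\|p-C\|-R\,\big|\le\delta_0\mu'\epsilon'$;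 it is then said to be certified by $p$ and $B(C,R)$. *)

(* Defs.v *)
From Stdlib Require Import Reals List.
From mathcomp Require Import ssreflect ssrbool fintype bigop.
Import ListNotations.
Set Implicit Arguments.
Unset Strict Implicit.

Open Scope R_scope.

Definition pt (m : nat) := 'I_m -> R.

Definition origin {m : nat} : pt m := fun _ => 0.

Definition dist {m : nat} (x y : pt m) : R :=
  sqrt (\big[Rplus/0]_(i < m) ((x i - y i) * (x i - y i))).

Definition ball {m : nat} (c : pt m) (r : R) (y : pt m) : Prop := dist c y < r.

Definition boundary {m : nat} (X : pt m -> Prop) (x : pt m) : Prop :=
  forall r, 0 < r ->
    (exists y, X y /\ dist x y < r) /\ (exists y, ~ X y /\ dist x y < r).

(** Distance from a point to a set, d(x,X) = inf_{y in X} |x-y| (inf of the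
    empty set = +oo); we only need comparisons of d(x,X) with a real c, which
    we write out as what the infimum literally unfolds to. *)
Definition dist_set_lt {m : nat} (x : pt m) (X : pt m -> Prop) (c : R) : Prop :=
  exists y, X y /\ dist x y < c.
Definition dist_set_ge {m : nat} (x : pt m) (X : pt m -> Prop) (c : R) : Prop :=
  forall y, X y -> c <= dist x y.
Definition dist_set_gt {m : nat} (x : pt m) (X : pt m -> Prop) (c : R) : Prop :=
  exists c', c < c' /\ dist_set_ge x X c'.

(** Finite point sets and simplices are represented by duplicate-free lists
    of points. Linear combinations of the points of a list, with the
    coefficient of the k-th point (0-based) given by lam k. *)
Fixpoint lincomb {m : nat} (lam : nat -> R) (S : list (pt m)) : pt m :=
  match S with
  | [] => fun _ => 0
  | p :: S' => fun i => lam 0%nat * p i + lincomb (fun k => lam (Datatypes.S k)) S' i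
  end.

Fixpoint wsum {m : nat} (lam : nat -> R) (S : list (pt m)) : R :=
  match S with
  | [] => 0
  | _ :: S' => lam 0%nat + wsum (fun k => lam (Datatypes.S k)) S'
  end.

Definition in_conv {m : nat} (S : list (pt m)) (x : pt m) : Prop :=
  exists lam : nat -> R,
    (forall k, (k < length S)%nat -> 0 <= lam k) /\
    wsum lam S = 1 /\ x = lincomb lam S.

Definition in_aff {m : nat} (S : list (pt m)) (x : pt m) : Prop :=
  exists lam : nat -> R, wsum lam S = 1 /\ x = lincomb lam S.

Definition eps_dense {m : nat} (P : list (pt m)) (eps : R) : Prop :=
  forall x, in_conv P x ->
    dist_set_lt x (fun y => In y P \/ boundary (in_conv P) y) eps.

Definition separated {m : nat} (P : list (pt m)) (s : R) : Prop :=
  forall p q, In p P -> In q P -> p <> q -> s <= dist p q.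

Definition is_net {m : nat} (P : list (pt m)) (mu eps : R) : Prop :=
  0 < mu <= 1 /\ 0 < eps /\ eps_dense P eps /\ separated P (mu * eps).

Definition in_D {m : nat} (P : list (pt m)) (eps : R) (x : pt m) : Prop :=
  in_conv P x /\ dist_set_ge x (boundary (in_conv P)) eps.

Definition simplex {m : nat} (s : list (pt m)) : Prop := s <> [] /\ NoDup s.

Definition simplex_dim {m : nat} (s : list (pt m)) : nat := (length s - 1)%nat.

Definition face {m : nat} (t s : list (pt m)) : Prop := simplex t /\ incl t s.
Definition proper_face {m : nat} (t s : list (pt m)) : Prop :=
  face t s /\ (length t < length s)%nat.

(** Removing the vertex at position i: sigma_p for p = nth i sigma. *)
Fixpoint rem_at {A : Type} (i : nat) (l : list A) : list A :=
  match l, i with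
  | [], _ => []
  | _ :: l', O => l'
  | x :: l', S i' => x :: rem_at i' l'
  end.

Definition diam {m : nat} (s : list (pt m)) : R :=
  fold_right Rmax 0 (map (fun pq => dist (fst pq) (snd pq)) (list_prod s s)).

Definition altitude_ge {m : nat} (s : list (pt m)) (i : nat) (c : R) : Prop :=
  dist_set_ge (nth i s origin) (in_aff (rem_at i s)) c.

(** Upsilon(sigma) >= c, where Upsilon(sigma) = 1 if j = 0 and otherwise
    min_p D(p,sigma)/(j L(sigma)), j = dim sigma (here j L(sigma) > 0). *)
Definition thickness_ge {m : nat} (s : list (pt m)) (c : R) : Prop :=
  let j := simplex_dim s in
  if Nat.eqb j 0 then c <= 1
  else forall i, (i < length s)%nat ->
         altitude_ge s i (c * (INR j * diam s)).

Definition good {m : nat} (G0 : R) (s : list (pt m)) : Prop :=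
  forall t, face t s -> thickness_ge t (G0 ^ simplex_dim t).

Definition flake {m : nat} (G0 : R) (s : list (pt m)) : Prop :=
  ~ good G0 s /\ forall t, proper_face t s -> good G0 t.

Definition circumscribing {m : nat} (s : list (pt m)) (C : pt m) (R0 : R) : Prop :=
  0 < R0 /\ forall v, In v s -> dist C v = R0.

Definition empty_ball {m : nat} (P : list (pt m)) (x : pt m) (r : R) : Prop :=
  forall p, In p P -> ~ ball x r p.

Definition delaunay_ball {m : nat} (P : list (pt m)) (x : pt m) (r : R) : Prop :=
  0 < r /\ empty_ball P x r /\
  forall r', 0 < r' -> empty_ball P x r' -> forall y, ball x r' y -> ball x r y.

Definition delaunay_with {m : nat} (P : list (pt m)) (s : list (pt m))
    (x : pt m) (r : R) : Prop :=
  delaunay_ball P x r /\ forall v, In v s -> boundary (ball x r) v.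

Definition in_Del_D {m : nat} (P : list (pt m)) (eps : R) (s : list (pt m)) : Prop :=
  simplex s /\ incl s P /\
  exists x r, delaunay_with P s x r /\ in_D P eps x.

Definition protected {m : nat} (P : list (pt m)) (delta : R) (s : list (pt m)) : Prop :=
  exists x r, delaunay_with P s x r /\
    forall q, In q P -> ~ In q s -> dist_set_gt q (boundary (ball x r)) delta.

Definition forbidden {m : nat} (P : list (pt m)) (mu eps G0 d0 : R)
    (t : list (pt m)) : Prop :=
  simplex t /\ incl t P /\
  (exists k : nat, length t = (k + 2)%nat /\ (k <= m)%nat) /\
  flake G0 t /\
  exists i, (i < length t)%nat /\
    exists C R0, circumscribing (rem_at i t) C R0 /\ R0 < eps /\
      Rabs (dist (nth i t origin) C - R0) <= d0 * mu * eps.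

(* Main.v *)
Require Import Defs.
From Stdlib Require Import Reals List Lra Lia Classical FunctionalExtensionality.
From mathcomp Require Import ssreflect ssrbool eqtype fintype bigop.
From HB Require Import structures.
Import ListNotations.
Open Scope R_scope.

Lemma Rplus_assoc' : ssrfun.associative Rplus. Proof. intros a b c; ring. Qed.
HB.instance Definition _ := Monoid.isComLaw.Build R 0 Rplus Rplus_assoc' Rplus_comm Rplus_0_l.

Notation W n i := (widen_ord (ssrnat.leqnSn n) i).

Lemma bs_recr n (f : 'I_(S n) -> R) :
  \big[Rplus/0]_(i < S n) f i = \big[Rplus/0]_(i < n) f (W n i) + f ord_max.
Proof. rewrite big_ord_recr //. Qed.

Lemma bs_nonneg n (f : 'I_n -> R) : (forall i, 0 <= f i) -> 0 <= \big[Rplus/0]_(i < n) f i.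
Proof.
  intros H. apply (big_ind (fun x => 0 <= x)); auto; intros; lra.
Qed.

Lemma bs_zero n (f : 'I_n -> R) : (forall i, 0 <= f i) -> \big[Rplus/0]_(i < n) f i = 0 ->
  forall i, f i = 0.
Proof.
  intros H Hs i.
  assert (E: \big[Rplus/0]_(j<n) f j = f i + \big[Rplus/0]_(j<n | j != i) f j) by (rewrite (bigD1 i) //).
  assert (0 <= \big[Rplus/0]_(j < n | j != i) f j).
  { apply (big_ind (fun x => 0 <= x)); auto; intros; lra. }
  pose proof (H i). lra.
Qed.

Lemma CS n (a b : 'I_n -> R) :
  (\big[Rplus/0]_(i < n) (a i * b i)) ^ 2 <=
  (\big[Rplus/0]_(i < n) (a i * a i)) * (\big[Rplus/0]_(i < n) (b i * b i)).
Proof.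
  induction n as [|n IH]. rewrite !big_ord0; lra.
  rewrite !bs_recr.
  specialize (IH (fun i => a (W n i)) (fun i => b (W n i))). simpl in IH.
  set C := \big[Rplus/0]_(i < n) (a (W n i) * b (W n i)) in IH |- *.
  set A := \big[Rplus/0]_(i < n) (a (W n i) * a (W n i)) in IH |- *.
  set B := \big[Rplus/0]_(i < n) (b (W n i) * b (W n i)) in IH |- *.
  assert (HA : 0 <= A) by (apply bs_nonneg; intros; apply Rle_0_sqr).
  assert (HB : 0 <= B) by (apply bs_nonneg; intros; apply Rle_0_sqr).
  set x := a ord_max. set y := b ord_max. clearbody x y A B C.
  assert (H0 : x*x*(y*y)*(C*C) <= x*x*(y*y)*(A*B)) by (apply Rmult_le_compat_l; nra).
  assert (H1 : (2*x*y*C)^2 <= (x*x*B + y*y*A)^2).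
  { assert (0 <= (x*x*B - y*y*A)^2) by apply pow2_ge_0. replace ((2*x*y*C)^2) with (4*(x*x*(y*y)*(C*C))) by ring.
    replace ((x*x*B + y*y*A)^2) with ((x*x*B - y*y*A)^2 + 4*(x*x*(y*y)*(A*B))) by ring. lra. }
  assert (H2 : 2*x*y*C <= x*x*B + y*y*A).
  { assert (0 <= x*x*B + y*y*A) by nra.
    destruct (Rle_dec (2*x*y*C) 0). lra.
    apply Rsqr_incr_0_var; unfold Rsqr; nra. }
  nra.
Qed.

Lemma bs_add n (f g : 'I_n -> R) :
  \big[Rplus/0]_(i < n) (f i + g i) = \big[Rplus/0]_(i < n) f i + \big[Rplus/0]_(i < n) g i.
Proof. rewrite big_split //. Qed.

Lemma bs_scal n c (f : 'I_n -> R) :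
  \big[Rplus/0]_(i < n) (c * f i) = c * \big[Rplus/0]_(i < n) f i.
Proof.
  induction n as [|n IH]. rewrite !big_ord0; ring.
  rewrite !bs_recr. rewrite (IH (fun i => f (W n i))). ring.
Qed.

Lemma bs_ext n (f g : 'I_n -> R) : (forall i, f i = g i) ->
  \big[Rplus/0]_(i < n) f i = \big[Rplus/0]_(i < n) g i.
Proof. intros H. apply eq_bigr; auto. Qed.

Lemma dist_nonneg {m} (x y : pt m) : 0 <= Defs.dist x y.
Proof. unfold Defs.dist. apply sqrt_pos. Qed.

Lemma dist_sym {m} (x y : pt m) : Defs.dist x y = Defs.dist y x.
Proof. unfold Defs.dist. f_equal. apply bs_ext. intros; ring. Qed.

Lemma dist_self {m} (x : pt m) : Defs.dist x x = 0.
Proof. unfold Defs.dist. rewrite big1. apply sqrt_0. intros. ring. Qed.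

Lemma dist_eq0 {m} (x y : pt m) : Defs.dist x y = 0 -> x = y.
Proof.
  unfold Defs.dist. intros H. apply sqrt_eq_0 in H.
  2: apply bs_nonneg; intros; apply Rle_0_sqr.
  apply functional_extensionality. intros i.
  pose proof (@bs_zero m (fun i => (x i - y i) * (x i - y i))) as Z.
  simpl in Z. specialize (Z ltac:(intros; apply Rle_0_sqr) H i). nra.
Qed.

Lemma dist_triangle {m} (x y z : pt m) : Defs.dist x z <= Defs.dist x y + Defs.dist y z.
Proof.
  unfold Defs.dist.
  set a := fun i => x i - y i. set b := fun i => y i - z i.
  rewrite (@bs_ext m (fun i => (x i - z i) * (x i - z i))
     (fun i => (a i * a i + (2 * (a i * b i) + b i * b i)))).
  2: intros; unfold a, b; ring.
  rewrite bs_add bs_add bs_scal.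
  pose proof (@CS m a b) as HC.
  set A := \big[Rplus/0]_(i < m) (a i * a i) in HC |- *.
  set B := \big[Rplus/0]_(i < m) (b i * b i) in HC |- *.
  set C := \big[Rplus/0]_(i < m) (a i * b i) in HC |- *.
  assert (HA : 0 <= A) by (apply bs_nonneg; intros; apply Rle_0_sqr).
  assert (HB : 0 <= B) by (apply bs_nonneg; intros; apply Rle_0_sqr).
  clearbody A B C.
  pose proof (sqrt_pos A). pose proof (sqrt_pos B).
  pose proof (sqrt_sqrt A HA). pose proof (sqrt_sqrt B HB).
  assert (HC2 : C <= sqrt A * sqrt B).
  { destruct (Rle_dec C 0). nra. apply Rsqr_incr_0_var. unfold Rsqr.
    replace (sqrt A * sqrt B * (sqrt A * sqrt B)) with ((sqrt A * sqrt A) * (sqrt B * sqrt B)) by ring.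
    rewrite H1 H2. nra. nra. }
  rewrite <- (sqrt_Rsqr (sqrt A + sqrt B)) by lra.
  apply sqrt_le_1_alt. unfold Rsqr. nra.
Qed.

Lemma dist_rev {m} (x y z : pt m) : Rabs (Defs.dist x z - Defs.dist y z) <= Defs.dist x y.
Proof.
  pose proof (dist_triangle x y z). pose proof (dist_triangle y x z).
  rewrite (dist_sym y x) in H0. apply Rabs_le. lra.
Qed.

Lemma sphere_dist {m} (x v : pt m) r : 0 < r -> boundary (ball x r) v -> Defs.dist x v = r.
Proof.
  intros Hr Hb. unfold ball in Hb.
  destruct (Rtotal_order (Defs.dist x v) r) as [Hl|[He|Hg]]; auto.
  - destruct (Hb (r - Defs.dist x v)) as [_ [z [Hz Hd]]]. lra.
    pose proof (dist_triangle x v z). lra.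
  - destruct (Hb (Defs.dist x v - r)) as [[z [Hz Hd]] _]. lra.
    pose proof (dist_triangle x z v). rewrite (dist_sym z v) in H. lra.
Qed.

Lemma fold_Rmax_ge (l : list R) a : In a l -> a <= fold_right Rmax 0 l.
Proof.
  induction l as [|b l IH]; simpl; intros H. contradiction.
  destruct H as [<-|H]. apply Rmax_l. eapply Rle_trans. apply IH; auto. apply Rmax_r.
Qed.

Lemma diam_ge {m} (s : list (pt m)) p q : In p s -> In q s -> Defs.dist p q <= diam s.
Proof.
  intros Hp Hq. unfold diam. apply fold_Rmax_ge.
  change (Defs.dist p q) with ((fun pq : pt m * pt m => Defs.dist (fst pq) (snd pq)) (p, q)).
  apply in_map. apply in_prod; auto.
Qed.

Lemma rem_at_incl {A} i (l : list A) v : In v (rem_at i l) -> In v l.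
Proof.
  revert i; induction l as [|a l IH]; intros i; destruct i; simpl; auto.
  intros [H|H]; auto. right; eapply IH; eauto.
Qed.

Lemma rem_at_neq {A} i (l : list A) v d : NoDup l -> (i < length l)%nat -> In v (rem_at i l) -> v <> nth i l d.
Proof.
  revert i; induction l as [|a l IH]; intros i Hn Hi; destruct i; simpl in *; auto.
  - inversion Hn; subst. intros H ->. contradiction.
  - inversion Hn; subst. intros [<-|H].
    + intros E. apply H1. rewrite E. apply nth_In. lia.
    + apply IH; auto. lia.
Qed.

Lemma rem_at_length {A} i (l : list A) : (i < length l)%nat -> length (rem_at i l) = (length l - 1)%nat.
Proof.
  revert i; induction l as [|a l IH]; intros i Hi; destruct i; simpl in *; try lia.
  rewrite IH; lia.
Qed.

Fixpoint lincombN (c : nat -> R) (L : list (nat -> R)) (j : nat) : R :=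
  match L with
  | [] => 0
  | v :: L' => c 0%nat * v j + lincombN (fun k => c (S k)) L' j
  end.

Lemma lincombN_ext c c' L j : (forall k, c k = c' k) -> lincombN c L j = lincombN c' L j.
Proof.
  revert c c'; induction L as [|v L IH]; intros c c' H; simpl; auto.
  rewrite H. f_equal. apply IH. auto.
Qed.

Lemma lincombN_zero c L j : (forall v, In v L -> v j = 0) -> lincombN c L j = 0.
Proof.
  revert c; induction L as [|v L IH]; intros c H; simpl; auto.
  rewrite H; simpl; auto. rewrite IH; auto. ring. intros; apply H; simpl; auto.
Qed.

Lemma lincombN_scal t c L j : lincombN (fun k => t * c k) L j = t * lincombN c L j.
Proof.
  revert c; induction L as [|v L IH]; intros c; simpl. ring.
  rewrite (IH (fun k => c (S k))). ring.
Qed.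

Lemma lincombN_map d L n t (va : nat -> R) j :
  lincombN d (map (fun v x => v x - v n * t * va x) L) j = lincombN d L j - lincombN d L n * t * va j.
Proof.
  revert d; induction L as [|v L IH]; intros d; simpl. ring.
  rewrite IH. ring.
Qed.

Definition bump (a j : nat) : nat := if Nat.ltb j a then j else S j.

Lemma lincombN_shift c L a d j : (a < length L)%nat ->
  lincombN c L j = lincombN (fun k => c (bump a k)) (rem_at a L) j + c a * nth a L d j.
Proof.
  revert c a; induction L as [|v L IH]; intros c a Ha; simpl in *. lia.
  destruct a as [|a].
  - simpl. rewrite Rplus_comm. f_equal. 
  - simpl. rewrite (IH (fun k => c (S k)) a); [|lia].
    rewrite (lincombN_ext (fun k => c (S (bump a k))) (fun k => c (bump (S a) (S k))));
     [|intros k; unfold bump; change (Nat.ltb (S k) (S a)) with (Nat.ltb k a); destruct (Nat.ltb k a); reflexivity].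
    replace (bump (S a) 0) with 0%nat by reflexivity. ring.
Qed.

Lemma LD : forall n (L : list (nat -> R)), (n < length L)%nat ->
  (forall v j, In v L -> (n <= j)%nat -> v j = 0) ->
  exists c, (exists k, (k < length L)%nat /\ c k <> 0) /\ forall j, lincombN c L j = 0.
Proof.
  induction n as [|n IH]; intros L Hl Hs.
  - exists (fun k => if Nat.eqb k 0 then 1 else 0). split.
    + exists 0%nat. split; auto. simpl. lra.
    + intros j. apply lincombN_zero. intros v Hv. apply Hs; auto; lia.
  - destruct (classic (exists v, In v L /\ v n <> 0)) as [[va [Hva Hn]]|Hno].
    + destruct (In_nth L va (fun _ => 0) Hva) as [a [Ha Ea]].
      set L' := map (fun v x => v x - v n * / va n * va x) (rem_at a L).
      assert (HL' : length L' = (length L - 1)%nat) by (unfold L'; rewrite length_map rem_at_length; auto).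
      destruct (IH L') as [d [[k' [Hk' Hd]] Hz]].
      { lia. }
      { intros w j Hw Hj. unfold L' in Hw. apply in_map_iff in Hw as [u [<- Hu]].
        apply rem_at_incl in Hu.
        destruct (Nat.eq_dec j n) as [->|Hjn].
        - field. auto.
        - rewrite (Hs u j Hu); [|lia]. rewrite (Hs va j Hva); [|lia]. ring. }
      set ca := - (lincombN d (rem_at a L) n * / va n).
      set cf := (fun j => if Nat.eqb j a then ca else if Nat.ltb j a then d j else d (j - 1)%nat).
      assert (Hext : forall k, cf (bump a k) = d k).
      { intros k. unfold cf, bump. destruct (Nat.ltb k a) eqn:E.
        - apply Nat.ltb_lt in E. destruct (Nat.eqb k a) eqn:E2. apply Nat.eqb_eq in E2; lia.
          rewrite (proj2 (Nat.ltb_lt _ _) E). auto.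
        - apply Nat.ltb_ge in E. destruct (Nat.eqb (S k) a) eqn:E2. apply Nat.eqb_eq in E2; lia.
          destruct (Nat.ltb (S k) a) eqn:E3. apply Nat.ltb_lt in E3; lia.
          replace (S k - 1)%nat with k by lia. auto. }
      exists cf. split.
      * exists (bump a k'). split.
        { unfold bump. destruct (Nat.ltb k' a); lia. }
        rewrite Hext. auto.
      * intros j. rewrite (lincombN_shift cf L a (fun _ => 0) j Ha).
        rewrite (lincombN_ext (fun k => cf (bump a k)) d _ _ Hext).
        assert (Hca : cf a = ca) by (unfold cf; rewrite Nat.eqb_refl; reflexivity).
        rewrite Hca Ea. clearbody cf.
        specialize (Hz j). unfold L' in Hz. rewrite lincombN_map in Hz.
        unfold ca. lra.
    + apply IH; [lia|].
      intros v j Hv Hj. destruct (Nat.eq_dec j n) as [->|Hjn].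
      * destruct (Req_dec (v n) 0); auto. exfalso; apply Hno; eauto.
      * apply Hs; auto; lia.
Qed.

Definition E {m} (p : pt m) (j : nat) : R :=
  match (insub j : option 'I_m) with Some o => p o | None => if Nat.eqb j m then 1 else 0 end.

Lemma E_ord {m} (p : pt m) (o : 'I_m) : E p (nat_of_ord o) = p o.
Proof. unfold E. rewrite (valK o). reflexivity. Qed.

Lemma E_ge {m} (p : pt m) j : (m <= j)%nat -> E p j = if Nat.eqb j m then 1 else 0.
Proof.
  intros H. unfold E. case: insubP => [o Ho Eo|Ho]; auto.
  exfalso. pose proof (ltn_ord o) as L. move/ssrnat.ltP: L => L. rewrite Eo in L. lia.
Qed.

Lemma lincomb_E {m} c (S : list (pt m)) (o : 'I_m) : lincomb c S o = lincombN c (map E S) o.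
Proof.
  revert c; induction S as [|p S IH]; intros c; simpl; auto.
  rewrite IH E_ord. reflexivity.
Qed.

Lemma wsum_E {m} c (S : list (pt m)) : wsum c S = lincombN c (map E S) m.
Proof.
  revert c; induction S as [|p S IH]; intros c; simpl; auto.
  rewrite IH E_ge; [|lia]. rewrite Nat.eqb_refl. ring.
Qed.

Lemma rem_at_map {A B} (f : A -> B) k l : rem_at k (map f l) = map f (rem_at k l).
Proof.
  revert k; induction l as [|a l IH]; intros k; destruct k; simpl; auto. rewrite IH; auto.
Qed.

Lemma affine_dep {m} (Sl : list (pt m)) : length Sl = (m + 2)%nat ->
  exists k, (k < length Sl)%nat /\ in_aff (rem_at k Sl) (nth k Sl origin).
Proof.
  intros Hl.
  destruct (LD (S m) (map E Sl)) as [c [[k [Hk Hck]] Hz]].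
  { rewrite length_map. lia. }
  { intros v j Hv Hj. apply in_map_iff in Hv as [p [<- _]].
    rewrite E_ge; [|lia]. destruct (Nat.eqb j m) eqn:Ej; auto. apply Nat.eqb_eq in Ej; lia. }
  rewrite length_map in Hk.
  exists k. split; auto.
  set f := fun j => (- / c k) * c j.
  set g := fun j => f (bump k j).
  assert (Hrep : forall j, E (nth k Sl origin) j = lincombN g (map E (rem_at k Sl)) j).
  { intros j.
    assert (H0 : lincombN f (map E Sl) j = 0) by (unfold f; rewrite lincombN_scal Hz; ring).
    pose proof (lincombN_shift f (map E Sl) k (E (@origin m)) j) as Hsh. rewrite length_map in Hsh. specialize (Hsh Hk). rewrite Hsh in H0.
    rewrite map_nth rem_at_map in H0.
    assert (Hfk : f k = -1) by (unfold f; field; auto).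
    rewrite Hfk in H0. unfold g. lra. }
  exists g. split.
  - rewrite wsum_E -Hrep E_ge; [|lia]. rewrite Nat.eqb_refl. reflexivity.
  - apply functional_extensionality. intros o. rewrite lincomb_E -Hrep E_ord. reflexivity.
Qed.

Lemma thick_dim0 {m} (w : list (pt m)) G0 : length w = 1%nat -> thickness_ge w (G0 ^ simplex_dim w).
Proof. intros H. unfold thickness_ge, simplex_dim. rewrite H. simpl. lra. Qed.

Lemma exists_flake_aux {m} G0 (S0 : list (pt m)) : forall n t, (length t <= n)%nat -> face t S0 ->
  ~ thickness_ge t (G0 ^ simplex_dim t) -> exists tau, face tau S0 /\ flake G0 tau.
Proof.
  induction n as [|n IH]; intros t Hl Hf Ht.
  - destruct Hf as [[Hne _] _]. destruct t; simpl in Hl; [contradiction|lia].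
  - destruct (classic (exists u, proper_face u t /\ ~ good G0 u)) as [[u [[[Hu Hut] Hlu] Hg]]|Hno].
    + destruct (not_all_ex_not _ _ Hg) as [w Hw].
      apply imply_to_and in Hw. destruct Hw as [[Hws Hwu] Hwt].
      apply (IH w); auto.
      * pose proof (NoDup_incl_length (proj2 Hws) Hwu). lia.
      * split; auto. destruct Hf as [_ Hf]. eapply incl_tran; eauto. eapply incl_tran; eauto.
    + exists t. split; auto. split.
      * intros Hg. apply Ht. apply Hg. split; [apply Hf|apply incl_refl].
      * intros u Hu. apply NNPP. intros Hg. apply Hno. eauto.
Qed.

Lemma exists_flake {m} G0 (S0 : list (pt m)) : ~ good G0 S0 ->
  exists tau, face tau S0 /\ flake G0 tau /\ (2 <= length tau)%nat.
Proof.
  intros Hg. destruct (not_all_ex_not _ _ Hg) as [t0 Ht0].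
  apply imply_to_and in Ht0. destruct Ht0 as [Hf Ht].
  destruct (exists_flake_aux G0 S0 (length t0) t0 (le_n _) Hf Ht) as [tau [Htf Hfl]].
  exists tau. split; auto. split; auto.
  destruct Hfl as [Hng _]. destruct (not_all_ex_not _ _ Hng) as [w Hw].
  apply imply_to_and in Hw. destruct Hw as [[[Hne Hnd] Hwi] Hwt].
  pose proof (NoDup_incl_length Hnd Hwi).
  destruct w as [|a [|b w]]; [contradiction| |simpl in *; lia].
  exfalso. apply Hwt. apply thick_dim0. reflexivity.
Qed.

Lemma part2 {m} (P : list (pt m)) mu eps G0 d0 s x r :
  simplex s -> incl s P -> length s = (m + 1)%nat -> ~ good G0 s -> 0 < r -> r < eps ->
  (forall v, In v s -> Defs.dist x v = r) -> 0 <= d0 * mu * eps ->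
  exists t, forbidden P mu eps G0 d0 t.
Proof.
  intros Hs HsP Hl Hg Hr Hre Hv Hpos.
  destruct (exists_flake G0 s Hg) as [tau [[Hts Hti] [Hfl H2]]].
  exists tau. split; auto. split; [eapply incl_tran; eauto|].
  split.
  { exists (length tau - 2)%nat. split; [lia|].
    pose proof (NoDup_incl_length (proj2 Hts) Hti). lia. }
  split; auto.
  exists 0%nat. split; [lia|]. exists x, r. split; [|split; auto].
  - split; auto. intros v Hvr. apply Hv. apply Hti. eapply rem_at_incl; eauto.
  - rewrite dist_sym Hv. rewrite Rminus_diag Rabs_R0. auto.
    apply Hti. apply nth_In. lia.
Qed.

Theorem mainTheorem6 (m : nat) (P : list (pt m)) (mu eps G0 d0 : R) :
  NoDup P -> is_net P mu eps -> 0 < G0 <= 1 -> 0 <= d0 ->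
  ((exists s, in_Del_D P eps s /\ length s = (m + 1)%nat /\
              ~ protected P (d0 * mu * eps) s) ->
     exists t, forbidden P mu eps G0 d0 t) /\
  ((exists s, in_Del_D P eps s /\ length s = (m + 1)%nat /\ ~ good G0 s) ->
     exists t, forbidden P mu eps G0 d0 t).
Proof.
  intros HnP [Hmu [Heps [Hden Hsep]]] HG Hd0.
  assert (Hpos : 0 <= d0 * mu * eps).
  { apply Rmult_le_pos; [apply Rmult_le_pos|]; lra. }
  assert (Key : forall s, in_Del_D P eps s -> exists x r, delaunay_with P s x r /\ 0 < r /\ r < eps /\
             forall v, In v s -> Defs.dist x v = r).
  { intros s [_ [_ [x [r [[Hdb Hbd] [HinC HD]]]]]].
    exists x, r. split; [split; auto|].
    destruct Hdb as [Hr [Hemp _]]. split; auto. split.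
    - destruct (Hden x HinC) as [y [[Hy|Hy] Hxy]].
      + pose proof (Hemp y Hy). unfold ball in H. lra.
      + pose proof (HD y Hy). lra.
    - intros v Hv. apply sphere_dist; auto. }
  split.
  - intros [s [Hs [Hl Hnp]]].
    destruct (Key s Hs) as [x [r [Hdw [Hr [Hre Hv]]]]].
    destruct Hs as [Hsimp [HsP _]].
    destruct (classic (good G0 s)) as [Hgood|Hng].
    2: { eapply part2; eauto. }
    assert (Hq : exists q, In q P /\ ~ In q s /\ ~ dist_set_gt q (boundary (ball x r)) (d0 * mu * eps)).
    { apply NNPP. intros Hn. apply Hnp. exists x, r. split; auto.
      intros q Hq Hqs. apply NNPP. intros Hg. apply Hn. eauto. }
    destruct Hq as [q [HqP [Hqs Hqg]]].
    assert (Hqd : Rabs (Defs.dist q x - r) <= d0 * mu * eps).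
    { apply Rnot_lt_le. intros Hlt. apply Hqg. exists (Rabs (Defs.dist q x - r)). split; auto.
      intros y Hy. pose proof (sphere_dist x y r Hr Hy) as Hxy.
      pose proof (dist_rev q y x) as Hrv. rewrite (dist_sym y x) Hxy in Hrv. auto. }
    set S' := q :: s.
    assert (HnS' : NoDup S') by (constructor; [auto|apply Hsimp]).
    assert (HlS' : length S' = (m + 2)%nat) by (simpl; lia).
    assert (Hng' : ~ good G0 S').
    { intros Hg.
      destruct (affine_dep S' HlS') as [k [Hk Haff]].
      assert (Hf : face S' S') by (split; [split; [discriminate|auto]|apply incl_refl]).
      pose proof (Hg S' Hf) as Ht. unfold thickness_ge, simplex_dim in Ht.
      rewrite HlS' in Ht. replace (m + 2 - 1)%nat with (S m) in Ht by lia. simpl Nat.eqb in Ht.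
      rewrite HlS' in Hk. specialize (Ht k Hk (nth k S' origin) Haff). rewrite dist_self in Ht.
      assert (Hv0 : In (nth 0 s origin) s) by (apply nth_In; lia).
      assert (Hneq : q <> nth 0 s origin) by (intros E; apply Hqs; rewrite E; auto).
      assert (Hdp : 0 < Defs.dist q (nth 0 s origin)).
      { pose proof (dist_nonneg q (nth 0 s origin)). destruct (Req_dec (Defs.dist q (nth 0 s origin)) 0) as [E|E].
        - apply dist_eq0 in E. contradiction.
        - lra. }
      assert (Hdiam : Defs.dist q (nth 0 s origin) <= diam S') by (apply diam_ge; simpl; auto).
      assert (HGp : 0 < G0 ^ S m) by (apply pow_lt; lra).
      assert (HI : 0 < INR (S m)) by (apply lt_0_INR; lia).
      assert (0 < G0 ^ S m * (INR (S m) * diam S')).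
      { apply Rmult_lt_0_compat; auto. apply Rmult_lt_0_compat; lra. }
      lra. }
    destruct (exists_flake G0 S' Hng') as [tau [[Hts Hti] [Hfl H2]]].
    destruct (classic (In q tau)) as [Hqt|Hqt].
    + destruct (In_nth tau q origin Hqt) as [i [Hi Ei]].
      assert (Hts' : forall v, In v tau -> v <> q -> In v s).
      { intros v Hvt Hvq. destruct (Hti v Hvt) as [E|E]; auto. congruence. }
      exists tau. split; auto. split.
      { intros v Hvt.
        destruct (classic (v = q)) as [->|Hvq]; auto. }
      split.
      { exists (length tau - 2)%nat. split; [lia|].
        pose proof (NoDup_incl_length (proj2 Hts) Hti). lia. }
      split; auto.
      exists i. split; auto. exists x, r. split; [|split; auto].
      * split; auto. intros v Hvr. apply Hv. apply Hts'.
        eapply rem_at_incl; eauto.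
        rewrite <- Ei. eapply rem_at_neq; eauto. apply Hts.
      * rewrite Ei. auto.
    + exfalso. apply (proj1 Hfl). intros w [Hw Hwi]. apply Hgood. split; auto.
      intros v Hvw. specialize (Hti v (Hwi v Hvw)). destruct Hti as [E|E]; auto.
      subst. exfalso. apply Hqt. apply Hwi; auto.
  - intros [s [Hs [Hl Hng]]].
    destruct (Key s Hs) as [x [r [_ [Hr [Hre Hv]]]]].
    destruct Hs as [Hsimp [HsP _]].
    eapply part2; eauto.
Qed.
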